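(* Let $G$ be a locally compact group. For every neighborhood $U$ of the unit and every compact $C\subseteq G$ there exist a finite set $F\subseteq G$ and a family of subsets $\{A_{g,h}\subseteq F: g,h\in F\}$ such that: (1) $C\subseteq FU$; (2) if $g,h\in C\cap F$ then $A_{g,h}\subseteq ghU$; (3) for every $g\in F$ and every $S\subseteq F$, $\left|\bigcup_{h\in S}A_{g,h}\right|\geq|S|$.
   Context: For $X,Y\subseteq G$, $XY=\{xy:x\in X,y\in Y\}$ and $gX=\{gx:x\in X\}$. *)

(* Defs.v *)
From HB Require Import structures.
From mathcomp Require Import all_boot all_order all_algebra.
From mathcomp Require Import finmap.
From mathcomp Require Import boolp classical_sets topology.
Set Implicit Arguments. Unset Strict Implicit. Unset Printing Implicit Defensive.
Local Open Scope classical_set_scope.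

Definition is_topological_group (T : topologicalType)
    (mul : T -> T -> T) (inv : T -> T) (one : T) : Prop :=
  [/\ (forall x y z, mul x (mul y z) = mul (mul x y) z),
      (forall x, mul one x = x /\ mul x one = x),
      (forall x, mul (inv x) x = one /\ mul x (inv x) = one),
      continuous (fun p : T * T => mul p.1 p.2) &
      continuous inv].

Definition is_locally_compact_group (T : topologicalType)
    (mul : T -> T -> T) (inv : T -> T) (one : T) : Prop :=
  [/\ is_topological_group mul inv one, hausdorff_space T &
      locally_compact [set: T]].

Definition setmul (T : Type) (mul : T -> T -> T) (X Y : set T) : set T :=
  [set z | exists x y, X x /\ Y y /\ z = mul x y].

Definition lmulset (T : Type) (mul : T -> T -> T) (g : T) (X : set T) : set T :=
  [set z | exists x, X x /\ z = mul g x].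

(* Main.v *)
Require Import Defs.
From HB Require Import structures.
From mathcomp Require Import all_boot all_order all_algebra.
From mathcomp Require Import finmap.
From mathcomp Require Import boolp classical_sets topology.
From mathcomp Require Import zify.
Local Open Scope classical_set_scope.

Definition ptd (T : Type) (x : T) := T.
HB.instance Definition _ (T : topologicalType) (x : T) := Topological.on (ptd T x).
HB.instance Definition _ (T : topologicalType) (x : T) := isPointed.Build (ptd T x) x.

Lemma compact_fincover (T : topologicalType) (x : T) (A : set T) (I : choiceType) (D : set I) (f : I -> set T) :
  compact A -> (forall i, D i -> open (f i)) -> A `<=` cover D f -> finite_subset_cover D f A.
Proof.
move=> cA; have := @compact_cover (ptd T x); move=> /(congr1 (fun P => P A)).
move=> e; have : @cover_compact (ptd T x) A by rewrite -e.
by move=> h; apply: h.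
Qed.

Lemma topo (G : topologicalType) (mul : G -> G -> G) (inv : G -> G) (one : G)
  (hG : is_locally_compact_group mul inv one)
  (U : set G) (hU : nbhs one U) (C : set G) (hC : compact C) :
  exists (V K : set G), (forall v w, V v -> V w -> U (mul v (inv w))) /\ V one /\
    C `<=` K /\ (forall a b v, C a -> C b -> V v -> K (mul (mul a b) v)) /\
    exists F0 : {fset G}, K `<=` setmul mul [set x | x \in F0] V.
Proof.
case: hG => [[massoc munit minv cmul cinv] _ lc].
have inv1 : inv one = one.
  have [h _] := minv one; move: h; by rewrite (proj2 (munit _)).
have c1 : {for (one, one), continuous (fun p : G * G => mul p.1 (inv p.2))}.
  apply: (@continuous_comp _ _ _ (fun p : G * G => (p.1, inv p.2)) (fun p : G * G => mul p.1 p.2)); last exact: cmul.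
  apply: cvg_pair; first exact: cvg_fst.
  apply: (@continuous_comp _ _ _ snd inv); [exact: cvg_snd | exact: cinv].
have : nbhs (one, one) [set p : G * G | U (mul p.1 (inv p.2))].
  by apply: c1; rewrite /= inv1 (proj1 (munit _)).
case=> [[A B] /= [nA nB] sAB].
have [D nD [cD _]] := lc one I.
rewrite withinET in nD.
pose V := A `&` B `&` D.
have nV : nbhs one V by apply: filterI => //; apply: filterI.
exists V, (C `|` [set z | exists a b v, C a /\ C b /\ V v /\ z = mul (mul a b) v]).
split; [|split; [|split; [|split]]].
- move=> v w [[Av _] _] [[_ Bw] _]; exact: (sAB (v, w)).
- exact: nbhs_singleton.
- by move=> z Cz; left.
- by move=> a b v Ca Cb Vv; right; exists a, b, v.
pose h := fun p : (G * G) * G => mul (mul p.1.1 p.1.2) p.2.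
have ch : continuous h.
  move=> p; apply: (@continuous_comp _ _ _ (fun p : (G * G) * G => (mul p.1.1 p.1.2, p.2)) (fun p : G * G => mul p.1 p.2)); last exact: cmul.
  apply: cvg_pair; last exact: cvg_snd.
  apply: (@continuous_comp _ _ _ fst (fun p : G * G => mul p.1 p.2)); [exact: cvg_fst | exact: cmul].
have cK : compact (C `|` h @` ((C `*` C) `*` D)).
  apply: compactU => //; apply: continuous_compact; first exact: continuous_subspaceT.
  by apply: compact_setX => //; apply: compact_setX.
pose O := V°.
have oO : open O by exact: open_interior.
have O1 : O one by apply: nbhs_singleton; apply: nbhs_interior.
pose f := fun y : G => [set z | O (mul (inv y) z)].
have of_ : forall y, [set: G] y -> open (f y).
  move=> y _; apply: open_comp => // z _.
  apply: (@continuous_comp _ _ _ (fun z : G => (inv y, z)) (fun p : G * G => mul p.1 p.2)); last exact: cmul.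
  by apply: cvg_pair; [exact: cvg_cst | exact: cvg_id].
have cov : C `|` h @` ((C `*` C) `*` D) `<=` cover [set: G] f.
  by move=> z _; exists z => //; rewrite /f /= (proj1 (minv _)).
have [D' _ cD'] := @compact_fincover G one _ _ _ _ cK of_ cov.
exists D' => z Kz.
have : (C `|` h @` ((C `*` C) `*` D)) z.
  case: Kz => [Cz|[a [b [v [Ca [Cb [Vv ->]]]]]]]; first by left.
  by right; exists ((a, b), v) => //; split => //; case: Vv.
move=> /cD' [y Dy Oy]; exists y, (mul (inv y) z); split => //; split.
  exact: interior_subset.
by rewrite massoc (proj2 (minv _)) (proj1 (munit _)).
Qed.

Local Open Scope fset_scope.

Lemma core (G : choiceType) (mul : G -> G -> G) (inv : G -> G) (one : G)
  (massoc : forall x y z, mul x (mul y z) = mul (mul x y) z)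
  (munit : forall x, mul one x = x /\ mul x one = x)
  (minv : forall x, mul (inv x) x = one /\ mul x (inv x) = one)
  (U V K C : set G)
  (hVU : forall v w, V v -> V w -> U (mul v (inv w)))
  (hV1 : V one)
  (hCK : (C `<=` K)%classic)
  (hK : forall a b v, C a -> C b -> V v -> K (mul (mul a b) v))
  (hF0 : exists F0 : {fset G}, (K `<=` setmul mul [set x | x \in F0] V)%classic) :
  exists (F : {fset G}) (A : G -> G -> {fset G}),
    (forall g h, g \in F -> h \in F -> A g h `<=` F) /\
    (C `<=` setmul mul [set x | x \in F] U)%classic /\
    (forall g h, C g -> g \in F -> C h -> h \in F ->
       ([set x | x \in A g h] `<=` lmulset mul (mul g h) U)%classic) /\
    (forall g (S : {fset G}), g \in F -> S `<=` F ->
       (#|` S | <= #|` \bigcup_(h <- S) A g h |)%N).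
Proof.
have inv1 : inv one = one.
  have [h _] := minv one; move: h; by rewrite (proj2 (munit _)).
have VU : (V `<=` U)%classic.
  by move=> v Vv; have := hVU v one Vv hV1; rewrite inv1 (proj2 (munit _)).
pose P n := `[< exists F : {fset G}, #|` F| = n /\ (K `<=` setmul mul [set x | x \in F] V)%classic >].
have exP : exists n, P n.
  by case: hF0 => F0 h; exists #|` F0|; apply/asboolP; exists F0.
case: (ex_minnP exP) => n /asboolP [F [cF KF]] minF.
pose A g h := if `[< C g /\ C h >] then [fset f in F | `[< lmulset mul (mul g h) U f >]] else F.
exists F, A; split; [|split; [|split]].
- move=> g h _ _; rewrite /A; case: ifP => _; last exact: fsubset_refl.
  exact: fset_sub.
- move=> c /hCK /KF [x [y [Fx [Vy ->]]]]; exists x, y; split=> //; split=> //.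
  exact: VU.
- move=> g h Cg _ Ch _ x; rewrite /A; case: ifPn => [_|/asboolPn []//].
  by rewrite /= in_fset /= => /andP [_ /asboolP].
move=> g S Fg SF.
case: (pselect (exists2 h, h \in S & ~ (C g /\ C h))) => [[h hS nC]|nex].
  apply: (leq_trans (fsubset_leq_card SF)).
  apply: fsubset_leq_card.
  have := @bigfcup_sup _ _ S h xpredT (A g) hS isT.
  by rewrite {1}/A; case: ifPn => [/asboolP //|_].
have allC : forall h, h \in S -> C g /\ C h.
  by move=> h hS; apply: contrapT => nc; apply: nex; exists h.
set X := \bigcup_(h <- S) A g h.
pose F' := (F `\` S) `|` [fset mul (inv g) f | f in X].
have KF' : (K `<=` setmul mul [set x | x \in F'] V)%classic.
  move=> x /[dup] Kx /KF [f [v [Ff [Vv xfv]]]].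
  case: (boolP (f \in S)) => fS; last first.
    exists f, v; split=> //=; rewrite in_fsetU in_fsetD fS Ff //.
  have [Cg Cf] := allC f fS.
  have : K (mul (mul g f) v) by exact: hK.
  move=> /KF [f' [v' [Ff' [Vv' e']]]].
  exists (mul (inv g) f'), v'; split; last split => //.
    rewrite /= in_fsetU; apply/orP; right; apply/imfsetP; exists f' => //=.
    apply/bigfcupP; exists f; first by rewrite fS.
    rewrite /A; case: ifPn => [_|/asboolPn []//].
    rewrite in_fset inE /=; apply/andP; split; first exact: Ff'.
    apply/asboolP; exists (mul v (inv v')); split.
      exact: hVU.
    by rewrite massoc e' -massoc (proj2 (minv _)) (proj2 (munit _)).
  by rewrite -massoc -e' -massoc massoc (proj1 (minv _)) (proj1 (munit _)) xfv.
have : (n <= #|` F'|)%N by apply: minF; apply/asboolP; exists F'.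
rewrite -cF => h1.
have h2 : (#|` F'| <= #|` F `\` S| + #|` X|)%N.
  apply: (leq_trans (leq_card_fsetU _ _)); rewrite leq_add2l.
  rewrite card_in_imfset //= => a b _ _ eab.
  by rewrite -[a](proj1 (munit _)) -(proj2 (minv g)) -massoc eab massoc (proj2 (minv _)) (proj1 (munit _)).
rewrite cardfsDS // in h2.
have h3 := fsubset_leq_card SF.
lia.
Qed.

Theorem lemma1 (G : topologicalType) (mul : G -> G -> G) (inv : G -> G) (one : G)
  (hG : is_locally_compact_group mul inv one)
  (U : set G) (hU : nbhs one U) (C : set G) (hC : compact C) :
  exists (F : {fset G}) (A : G -> G -> {fset G}),
    (forall g h, g \in F -> h \in F -> A g h `<=` F) /\
    (C `<=` setmul mul [set x | x \in F] U)%classic /\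
    (forall g h, C g -> g \in F -> C h -> h \in F ->
       ([set x | x \in A g h] `<=` lmulset mul (mul g h) U)%classic) /\
    (forall g (S : {fset G}), g \in F -> S `<=` F ->
       (#|` S | <= #|` \bigcup_(h <- S) A g h |)%N).
Proof.
have [V [K [hVU [hV1 [hCK [hK hF0]]]]]] := @topo G mul inv one hG U hU C hC.
case: hG => [[massoc munit minv _ _] _ _].
exact: (@core G mul inv one massoc munit minv U V K C hVU hV1 hCK hK hF0).
Qed.
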